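(* Let $A_1,\dots,A_5$ be five points in the plane, with all subscripts taken modulo $5$, and assume the configuration is nondegenerate, in the sense that every line, intersection point and circle described below exists and is well defined. For $i=1,\dots,5$ define: - $B_{i+3}$ = the intersection point of the lines $A_iA_{i+1}$ and $A_{i+2}A_{i+3}$; - $K_{i+2}$ = the center of the circumcircle of triangle $A_iA_{i+1}B_{i+2}$; - $C_{i+1}$ = the second intersection point (other than $A_{i+1}$) of the circumcircles of triangles $A_iA_{i+1}B_{i+2}$ and $A_{i+1}A_{i+2}B_{i+3}$; - $L_i$ = the center of the circumcircle of triangle $C_{i+1}B_{i+2}B_{i+3}$. Assume that the five points $A_1,\dots,A_5$ lie on a circle with center $O$. The five points $C_1,\dots,C_5$ lie on a circle (Miquel's pentagram theorem); let $J$ be its center. The five lines $K_iL_i$, $i=1,\dots,5$, pass through a common point $X$. Then the points $O$, $J$, $X$ are collinear.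
   Context: Points are in the Euclidean plane; all indices are read modulo 5. *)

(* Defs.v *)
From HB Require Import structures.
From mathcomp Require Import all_boot all_order all_algebra.
From mathcomp Require Import reals.
Set Implicit Arguments. Unset Strict Implicit. Unset Printing Implicit Defensive.
Import Order.TTheory GRing.Theory Num.Theory.
Local Open Scope ring_scope.

Section Geo.
Variable R : realType.
Definition pt := (R * R)%type.

Definition cross (O P Q : pt) : R :=
  (P.1 - O.1) * (Q.2 - O.2) - (P.2 - O.2) * (Q.1 - O.1).

Definition sqdist (P Q : pt) : R := (P.1 - Q.1) ^+ 2 + (P.2 - Q.2) ^+ 2.

Definition collinear (P Q S : pt) : Prop := cross P Q S = 0.

(* X lies on the line through P and Q (P <> Q required separately) *)
Definition on_line (P Q X : pt) : Prop := cross P Q X = 0.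

(* the lines PQ and ST are well defined and not parallel, so meet in one point *)
Definition lines_meet (P Q S T : pt) : Prop :=
  (Q.1 - P.1) * (T.2 - S.2) - (Q.2 - P.2) * (T.1 - S.1) != 0.

Definition circumcenter (P Q S Z : pt) : Prop :=
  ~ collinear P Q S /\ sqdist Z P = sqdist Z Q /\ sqdist Z P = sqdist Z S.
End Geo.

Definition nx (i : 'I_5) (k : nat) : 'I_5 :=
  Ordinal (ltn_pmod (i + k) (isT : 0 < 5)%N).

(* Main.v *)
Require Import Defs.
From HB Require Import structures.
From mathcomp Require Import all_boot all_order all_algebra.
From mathcomp Require Import reals.
From mathcomp Require Import ring lra.
From mathcomp Require Import complex.
Set Implicit Arguments. Unset Strict Implicit. Unset Printing Implicit Defensive.
Import Order.TTheory GRing.Theory Num.Theory.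
Local Open Scope ring_scope.

Section Alg.
Variable F : fieldType.
Definition fB (x0 x1 x2 x3 : F) := (x0*x1*(x2+x3) - x2*x3*(x0+x1)) / (x0*x1 - x2*x3).
Definition fBb (x0 x1 x2 x3 : F) := (x0+x1-x2-x3) / (x0*x1 - x2*x3).
Definition fK (x4 x0 x1 x2 : F) := x0*x1*(x2-x4) / (x1*x2 - x0*x4).
Definition fKb (x4 x0 x1 x2 : F) := (x2-x4) / (x1*x2 - x0*x4).
Definition nC (x0 x1 x2 x3 x4 : F) := (x0^+2*x2*x4 + x0*x1*x2*x3 - x0*x1*x2*x4 - x0*x1*x3*x4 - x0*x2^+2*x3 + x1*x2*x3*x4).
Definition dC (x0 x1 x2 x3 x4 : F) := (x0^+2*x4 - x0*x1*x4 - x0*x3*x4 + x1*x2*x3 - x2^+2*x3 + x2*x3*x4).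
Definition nCb (x0 x1 x2 x3 x4 : F) := (x0^+2*x2 - x0*x1*x4 - x0*x2^+2 - x0*x2*x3 + x0*x2*x4 + x1*x2*x3).
Definition dCb (x0 x1 x2 x3 x4 : F) := (x0^+2*x1*x2 - x0^+2*x1*x4 + x0^+2*x2*x4 - x0*x1*x2^+2 - x0*x2^+2*x3 + x1*x2^+2*x3).
Definition nL (x0 x1 x2 x3 x4 : F) := (- x0^+2*x1^+2*x2*x3 + x0^+2*x1^+2*x3*x4 + x0^+2*x1*x2*x3*x4 - x0^+2*x1*x2*x4^+2 - x0^+2*x1*x3*x4^+2 + x0^+2*x2*x3*x4^+2 + x0*x1^+2*x2^+2*x4 + x0*x1*x2^+2*x3^+2 - x0*x1*x2^+2*x3*x4 - x0*x1*x2*x3^+2*x4 + x0*x1*x2*x3*x4^+2 - x0*x2^+2*x3^+2*x4 - x1^+2*x2^+2*x3*x4 + x1*x2^+2*x3^+2*x4).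
Definition dL (x0 x1 x2 x3 x4 : F) := (x0^+2*x1*x3*x4 - x0^+2*x1*x4^+2 - x0*x1^+2*x2*x3 + x0*x1^+2*x2*x4 - x0*x2*x3^+2*x4 + x0*x2*x3*x4^+2 + x1*x2^+2*x3^+2 - x1*x2^+2*x3*x4).
Definition nLb (x0 x1 x2 x3 x4 : F) := (x0^+2*x1*x4 - x0^+2*x3*x4 - x0*x1^+2*x4 + x0*x1*x2*x3 - x0*x1*x2*x4 - x0*x1*x3*x4 + x0*x1*x4^+2 + x0*x3^+2*x4 + x1^+2*x2*x3 - x1*x2^+2*x3 - x1*x2*x3^+2 + x1*x2*x3*x4 + x2^+2*x3*x4 - x2*x3*x4^+2).
Definition dLb (x0 x1 x2 x3 x4 : F) := (- x0^+2*x1*x3*x4 + x0^+2*x1*x4^+2 + x0*x1^+2*x2*x3 - x0*x1^+2*x2*x4 + x0*x2*x3^+2*x4 - x0*x2*x3*x4^+2 - x1*x2^+2*x3^+2 + x1*x2^+2*x3*x4).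
Definition pN (x0 x1 x2 x3 x4 : F) := (- x0^+2*x1^+2*x2*x3 + x0^+2*x1^+2*x3*x4 - x0^+2*x1*x2*x4^+2 + x0^+2*x2*x3*x4^+2 + x0*x1^+2*x2^+2*x4 + x0*x1*x2^+2*x3^+2 - x0*x1*x3^+2*x4^+2 - x0*x2^+2*x3^+2*x4 - x1^+2*x2^+2*x3*x4 + x1*x2*x3^+2*x4^+2).
Definition pP (x0 x1 x2 x3 x4 : F) := (- x0^+2*x1^+2*x2 + x0^+2*x1^+2*x4 - x0^+2*x1*x2*x4 + x0^+2*x1*x3*x4 - x0^+2*x1*x4^+2 + x0^+2*x3*x4^+2 + x0*x1^+2*x2^+2 - x0*x1^+2*x2*x3 + x0*x1^+2*x2*x4 + x0*x1*x2^+2*x3 - x0*x1*x3*x4^+2 - x0*x2*x3^+2*x4 + x0*x2*x3*x4^+2 - x0*x3^+2*x4^+2 - x1^+2*x2^+2*x3 + x1*x2^+2*x3^+2 - x1*x2^+2*x3*x4 + x1*x2*x3^+2*x4 - x2^+2*x3^+2*x4 + x2*x3^+2*x4^+2).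
Definition pD (x0 x1 x2 x3 x4 : F) := (- x0^+2*x1*x2*x4 + x0^+2*x1*x3*x4 - x0*x1^+2*x2*x3 + x0*x1^+2*x2*x4 + x0*x1*x2^+2*x3 - x0*x1*x3*x4^+2 - x0*x2*x3^+2*x4 + x0*x2*x3*x4^+2 - x1*x2^+2*x3*x4 + x1*x2*x3^+2*x4).
Definition pNb (x0 x1 x2 x3 x4 : F) := (x0^+2*x1*x2 - x0^+2*x3*x4 - x0*x1^+2*x4 - x0*x1*x2^+2 + x0*x1*x4^+2 + x0*x3^+2*x4 + x1^+2*x2*x3 - x1*x2*x3^+2 + x2^+2*x3*x4 - x2*x3*x4^+2).
Definition fC (x0 x1 x2 x3 x4 : F) := nC x0 x1 x2 x3 x4 / dC x0 x1 x2 x3 x4.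
Definition fCb (x0 x1 x2 x3 x4 : F) := nCb x0 x1 x2 x3 x4 / dCb x0 x1 x2 x3 x4.
Definition fL (x0 x1 x2 x3 x4 : F) := nL x0 x1 x2 x3 x4 / dL x0 x1 x2 x3 x4.
Definition fLb (x0 x1 x2 x3 x4 : F) := nLb x0 x1 x2 x3 x4 / dLb x0 x1 x2 x3 x4.

Lemma cert2 {x y E1 E2 c1 c2 : F} :
  x - y = c1 * E1 + c2 * E2 -> E1 = 0 -> E2 = 0 -> x = y.
Proof. by move=> h e1 e2; apply/eqP; rewrite -subr_eq0 h e1 e2 !mulr0 addr0. Qed.

Lemma eq0_of_eq (x y : F) : x = y -> x - y = 0.
Proof. by move=> ->; rewrite subrr. Qed.

Ltac nzt :=
  match goal with
  | |- is_true (?e != 0) =>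
    match goal with
    | H : is_true (?d != 0) |- _ =>
        (have ->: e = d by (try unfold dC, dCb, pP, pD, dL, dLb); ring); exact H
    | H : is_true (?d != 0) |- _ =>
        (have ->: e = - d by (try unfold dC, dCb, pP, pD, dL, dLb); ring); rewrite oppr_eq0; exact H
    end
  end.
Ltac splitnz := repeat (apply/andP; split);
  try (rewrite ?oppr_eq0 ?mulf_eq0 ?expf_eq0 /= ?negb_or; repeat (apply/andP; split)).
Ltac fsides := splitnz; try assumption; try nzt.
Ltac fld := (try unfold fB, fBb, fK, fKb, fC, fCb, fL, fLb, nC, dC, nCb, dCb, nL, dL, nLb, dLb, pN, pP, pD, pNb); field; fsides.

Lemma LB (x0 x1 x2 x3 b bb : F) : x0 != 0 -> x1 != 0 -> x2 != 0 -> x3 != 0 ->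
  (x1 - x0)*(x3^-1 - x2^-1) - (x1^-1 - x0^-1)*(x3 - x2) != 0 ->
  (x1 - x0)*(bb - x0^-1) - (x1^-1 - x0^-1)*(b - x0) = 0 ->
  (x3 - x2)*(bb - x2^-1) - (x3^-1 - x2^-1)*(b - x2) = 0 ->
  [/\ b = fB x0 x1 x2 x3, bb = fBb x0 x1 x2 x3, x1 - x0 != 0, x3 - x2 != 0
    & x0*x1 - x2*x3 != 0].
Proof.
move=> n0 n1 n2 n3 hlm h1 h2.
have e : (x1 - x0)*(x3^-1 - x2^-1) - (x1^-1 - x0^-1)*(x3 - x2)
   = - ((x1-x0)*(x3-x2)*(x0*x1-x2*x3)/(x0*x1*x2*x3)) by fld.
have n10 : x1 - x0 != 0 by apply: contraNneq hlm => z; rewrite e z !(mul0r, mulr0, oppr0).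
have n32 : x3 - x2 != 0 by apply: contraNneq hlm => z; rewrite e z !(mul0r, mulr0, oppr0).
have nd : x0*x1 - x2*x3 != 0 by apply: contraNneq hlm => z; rewrite e z !(mul0r, mulr0, oppr0).
split => //.
- refine (@cert2 _ _ _ _ (-(x2*x3*x0*x1)/((x0*x1 - x2*x3)*(x1-x0)))
                ((x0*x1*x2*x3)/((x0*x1 - x2*x3)*(x3-x2))) _ h1 h2); fld.
- refine (@cert2 _ _ _ _ ((x0*x1)/((x0*x1 - x2*x3)*(x1-x0)))
                (-(x2*x3)/((x0*x1 - x2*x3)*(x3-x2))) _ h1 h2); fld.
Qed.

Lemma LK (x4 x0 x1 x2 k kb : F) : x4 != 0 -> x0 != 0 -> x1 != 0 -> x2 != 0 ->
  x4*x0 - x1*x2 != 0 ->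
  (x1 - x0)*(fBb x4 x0 x1 x2 - x0^-1) - (x1^-1 - x0^-1)*(fB x4 x0 x1 x2 - x0) != 0 ->
  (k - x0)*(kb - x0^-1) = (k - x1)*(kb - x1^-1) ->
  (k - x0)*(kb - x0^-1) = (k - fB x4 x0 x1 x2)*(kb - fBb x4 x0 x1 x2) ->
  [/\ k = fK x4 x0 x1 x2, kb = fKb x4 x0 x1 x2, x0 - x1 != 0, x0 - x2 != 0 & x1 - x4 != 0].
Proof.
move=> n4 n0 n1 n2 nb hnc h1 h2.
have nb' : x1*x2 - x0*x4 != 0.
  apply: contraNneq nb => z. have -> : x4*x0 - x1*x2 = -(x1*x2 - x0*x4) by ring.
  by rewrite z oppr0.
have e : (x1 - x0)*(fBb x4 x0 x1 x2 - x0^-1) - (x1^-1 - x0^-1)*(fB x4 x0 x1 x2 - x0)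
   = (x0-x1)^+2*(x0-x2)*(x1-x4)/(x0*x1*(x1*x2 - x0*x4)) by fld.
have n01 : x0 - x1 != 0 by apply: contraNneq hnc => z; rewrite e z !(expr0n, mul0r, mulr0, oppr0).
have n02 : x0 - x2 != 0 by apply: contraNneq hnc => z; rewrite e z !(expr0n, mul0r, mulr0, oppr0).
have n14 : x1 - x4 != 0 by apply: contraNneq hnc => z; rewrite e z !(expr0n, mul0r, mulr0, oppr0).
move/eq0_of_eq: h1 => h1; move/eq0_of_eq: h2 => h2.
split => //.
- refine (@cert2 _ _ _ _ ((fB x4 x0 x1 x2 - x0)/(-((x0-x1)^+2*(x0-x2)*(x1-x4)/(x0*x1*(x1*x2 - x0*x4)))))
    (-(x1 - x0)/(-((x0-x1)^+2*(x0-x2)*(x1-x4)/(x0*x1*(x1*x2 - x0*x4))))) _ h1 h2); fld.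
- refine (@cert2 _ _ _ _ (-(fBb x4 x0 x1 x2 - x0^-1)/(-((x0-x1)^+2*(x0-x2)*(x1-x4)/(x0*x1*(x1*x2 - x0*x4)))))
    ((x1^-1 - x0^-1)/(-((x0-x1)^+2*(x0-x2)*(x1-x4)/(x0*x1*(x1*x2 - x0*x4))))) _ h1 h2); fld.
Qed.

Lemma LC (x0 x1 x2 x3 x4 c cb : F) : x0 != 0 -> x1 != 0 -> x2 != 0 -> x3 != 0 -> x4 != 0 ->
  x4*x0 - x1*x2 != 0 -> x0*x1 - x2*x3 != 0 ->
  c - x1 != 0 -> fK x4 x0 x1 x2 - fK x0 x1 x2 x3 != 0 -> fKb x4 x0 x1 x2 - fKb x0 x1 x2 x3 != 0 ->
  (fK x4 x0 x1 x2 - c)*(fKb x4 x0 x1 x2 - cb) = (fK x4 x0 x1 x2 - x1)*(fKb x4 x0 x1 x2 - x1^-1) ->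
  (fK x0 x1 x2 x3 - c)*(fKb x0 x1 x2 x3 - cb) = (fK x0 x1 x2 x3 - x1)*(fKb x0 x1 x2 x3 - x1^-1) ->
  [/\ c = fC x0 x1 x2 x3 x4, cb = fCb x0 x1 x2 x3 x4, dC x0 x1 x2 x3 x4 != 0 & dCb x0 x1 x2 x3 x4 != 0].
Proof.
move=> n0 n1 n2 n3 n4 nb1 nb2 hc hk hkb h1 h2.
have nb1' : x0*x4 - x1*x2 != 0.
  apply: contraNneq nb1 => z. have -> : x4*x0 - x1*x2 = (x0*x4 - x1*x2) by ring.
  by rewrite z.
have e1 : fK x4 x0 x1 x2 - fK x0 x1 x2 x3 = - (x1 * dCb x0 x1 x2 x3 x4 / ((x0*x1 - x2*x3)*(x0*x4 - x1*x2))) by fld.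
have e2 : fKb x4 x0 x1 x2 - fKb x0 x1 x2 x3 = - (dC x0 x1 x2 x3 x4 / ((x0*x1 - x2*x3)*(x0*x4 - x1*x2))) by fld.
have nC : dC x0 x1 x2 x3 x4 != 0 by apply: contraNneq hkb => z; rewrite e2 z !(mul0r, oppr0).
have nCb : dCb x0 x1 x2 x3 x4 != 0 by apply: contraNneq hk => z; rewrite e1 z !(mul0r, mulr0, oppr0).
move/eq0_of_eq: h1 => h1; move/eq0_of_eq: h2 => h2.
pose S1 := x1 * dCb x0 x1 x2 x3 x4 / ((x0*x1 - x2*x3)*(x0*x4 - x1*x2)).
pose S2 := - (dC x0 x1 x2 x3 x4 / ((x0*x1 - x2*x3)*(x0*x4 - x1*x2))).
pose m := S2 / S1.
pose u := c - x1.
pose w := (u + x1 - fK x4 x0 x1 x2) / S1.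
split => //.
- refine (@cert2 _ _ _ _ ((1 - w)/(u * m)) (w/(u * m)) _ h1 h2).
  rewrite /w /m /u /S1 /S2; fld.
- refine (@cert2 _ _ _ _ (1/S1 + (1 - w)/u) (-1/S1 + w/u) _ h1 h2).
  rewrite /w /m /u /S1 /S2; fld.
Qed.

Lemma LL (x0 x1 x2 x3 x4 l lb : F) : x0 != 0 -> x1 != 0 -> x2 != 0 -> x3 != 0 -> x4 != 0 ->
  x4*x0 - x1*x2 != 0 -> x0*x1 - x2*x3 != 0 -> x3 - x4 != 0 ->
  dC x0 x1 x2 x3 x4 != 0 -> dCb x0 x1 x2 x3 x4 != 0 ->
  (fB x4 x0 x1 x2 - fC x0 x1 x2 x3 x4)*(fBb x0 x1 x2 x3 - fCb x0 x1 x2 x3 x4)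
   - (fBb x4 x0 x1 x2 - fCb x0 x1 x2 x3 x4)*(fB x0 x1 x2 x3 - fC x0 x1 x2 x3 x4) != 0 ->
  (l - fC x0 x1 x2 x3 x4)*(lb - fCb x0 x1 x2 x3 x4) = (l - fB x4 x0 x1 x2)*(lb - fBb x4 x0 x1 x2) ->
  (l - fC x0 x1 x2 x3 x4)*(lb - fCb x0 x1 x2 x3 x4) = (l - fB x0 x1 x2 x3)*(lb - fBb x0 x1 x2 x3) ->
  [/\ l = fL x0 x1 x2 x3 x4, lb = fLb x0 x1 x2 x3 x4, x0 - x2 != 0, x0 - x3 != 0 & x2 - x4 != 0].
Proof.
move=> n0 n1 n2 n3 n4 nb1 nb2 n34 nC nCb hnc h1 h2.
have nb1' : x0*x4 - x1*x2 != 0.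
  apply: contraNneq nb1 => z. have -> : x4*x0 - x1*x2 = (x0*x4 - x1*x2) by ring.
  by rewrite z.
pose dS := (x0-x1)*(x0-x2)*(x0-x2)*(x0-x3)*(x1-x2)*(x2-x4)*(x3-x4)/(dC x0 x1 x2 x3 x4 * dCb x0 x1 x2 x3 x4).
have e : (fB x4 x0 x1 x2 - fC x0 x1 x2 x3 x4)*(fBb x0 x1 x2 x3 - fCb x0 x1 x2 x3 x4)
   - (fBb x4 x0 x1 x2 - fCb x0 x1 x2 x3 x4)*(fB x0 x1 x2 x3 - fC x0 x1 x2 x3 x4) = - dS.
  rewrite /dS; fld.
have n01 : x0 - x1 != 0 by apply: contraNneq hnc => z; rewrite e /dS z !(mul0r, mulr0, oppr0).
have n02 : x0 - x2 != 0 by apply: contraNneq hnc => z; rewrite e /dS z !(mul0r, mulr0, oppr0).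
have n03 : x0 - x3 != 0 by apply: contraNneq hnc => z; rewrite e /dS z !(mul0r, mulr0, oppr0).
have n12 : x1 - x2 != 0 by apply: contraNneq hnc => z; rewrite e /dS z !(mul0r, mulr0, oppr0).
have n24 : x2 - x4 != 0 by apply: contraNneq hnc => z; rewrite e /dS z !(mul0r, mulr0, oppr0).
have ndL : dL x0 x1 x2 x3 x4 != 0.
  have -> : dL x0 x1 x2 x3 x4 = (x3-x4)*(x0*x1-x2*x3)*(x0*x4-x1*x2) by rewrite /dL; ring.
  by rewrite !mulf_neq0.
have ndLb : dLb x0 x1 x2 x3 x4 != 0.
  have -> : dLb x0 x1 x2 x3 x4 = -((x3-x4)*(x0*x1-x2*x3)*(x0*x4-x1*x2)) by rewrite /dLb; ring.
  by rewrite oppr_eq0 !mulf_neq0.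
move/eq0_of_eq: h1 => h1; move/eq0_of_eq: h2 => h2.
split => //.
- refine (@cert2 _ _ _ _ ((fB x0 x1 x2 x3 - fC x0 x1 x2 x3 x4)/dS) (-(fB x4 x0 x1 x2 - fC x0 x1 x2 x3 x4)/dS) _ h1 h2).
  rewrite /dS; fld.
- refine (@cert2 _ _ _ _ (-(fBb x0 x1 x2 x3 - fCb x0 x1 x2 x3 x4)/dS) ((fBb x4 x0 x1 x2 - fCb x0 x1 x2 x3 x4)/dS) _ h1 h2).
  rewrite /dS; fld.
Qed.

Lemma GJ1 (a0 a1 a2 a3 a4 : F) : a0 != 0 -> a1 != 0 -> a2 != 0 -> a3 != 0 -> a4 != 0 -> dC a0 a1 a2 a3 a4 != 0 -> dCb a0 a1 a2 a3 a4 != 0 -> dC a1 a2 a3 a4 a0 != 0 -> dCb a1 a2 a3 a4 a0 != 0 -> dC a2 a3 a4 a0 a1 != 0 -> dCb a2 a3 a4 a0 a1 != 0 -> dC a3 a4 a0 a1 a2 != 0 -> dCb a3 a4 a0 a1 a2 != 0 -> dC a4 a0 a1 a2 a3 != 0 -> dCb a4 a0 a1 a2 a3 != 0 -> pP a0 a1 a2 a3 a4 != 0 ->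
  ((pN a0 a1 a2 a3 a4 / pP a0 a1 a2 a3 a4) - fC a0 a1 a2 a3 a4)*((- pNb a0 a1 a2 a3 a4 / pP a0 a1 a2 a3 a4) - fCb a0 a1 a2 a3 a4) = ((pN a0 a1 a2 a3 a4 / pP a0 a1 a2 a3 a4) - fC a4 a0 a1 a2 a3)*((- pNb a0 a1 a2 a3 a4 / pP a0 a1 a2 a3 a4) - fCb a4 a0 a1 a2 a3).
Proof. intros; fld. Qed.

Lemma GJ2 (a0 a1 a2 a3 a4 : F) : a0 != 0 -> a1 != 0 -> a2 != 0 -> a3 != 0 -> a4 != 0 -> dC a0 a1 a2 a3 a4 != 0 -> dCb a0 a1 a2 a3 a4 != 0 -> dC a1 a2 a3 a4 a0 != 0 -> dCb a1 a2 a3 a4 a0 != 0 -> dC a2 a3 a4 a0 a1 != 0 -> dCb a2 a3 a4 a0 a1 != 0 -> dC a3 a4 a0 a1 a2 != 0 -> dCb a3 a4 a0 a1 a2 != 0 -> dC a4 a0 a1 a2 a3 != 0 -> dCb a4 a0 a1 a2 a3 != 0 -> pP a0 a1 a2 a3 a4 != 0 ->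
  ((pN a0 a1 a2 a3 a4 / pP a0 a1 a2 a3 a4) - fC a1 a2 a3 a4 a0)*((- pNb a0 a1 a2 a3 a4 / pP a0 a1 a2 a3 a4) - fCb a1 a2 a3 a4 a0) = ((pN a0 a1 a2 a3 a4 / pP a0 a1 a2 a3 a4) - fC a4 a0 a1 a2 a3)*((- pNb a0 a1 a2 a3 a4 / pP a0 a1 a2 a3 a4) - fCb a4 a0 a1 a2 a3).
Proof. intros; fld. Qed.

Lemma GJ3 (a0 a1 a2 a3 a4 : F) : a0 != 0 -> a1 != 0 -> a2 != 0 -> a3 != 0 -> a4 != 0 -> dC a0 a1 a2 a3 a4 != 0 -> dCb a0 a1 a2 a3 a4 != 0 -> dC a1 a2 a3 a4 a0 != 0 -> dCb a1 a2 a3 a4 a0 != 0 -> dC a2 a3 a4 a0 a1 != 0 -> dCb a2 a3 a4 a0 a1 != 0 -> dC a3 a4 a0 a1 a2 != 0 -> dCb a3 a4 a0 a1 a2 != 0 -> dC a4 a0 a1 a2 a3 != 0 -> dCb a4 a0 a1 a2 a3 != 0 -> pP a0 a1 a2 a3 a4 != 0 ->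
  ((pN a0 a1 a2 a3 a4 / pP a0 a1 a2 a3 a4) - fC a2 a3 a4 a0 a1)*((- pNb a0 a1 a2 a3 a4 / pP a0 a1 a2 a3 a4) - fCb a2 a3 a4 a0 a1) = ((pN a0 a1 a2 a3 a4 / pP a0 a1 a2 a3 a4) - fC a4 a0 a1 a2 a3)*((- pNb a0 a1 a2 a3 a4 / pP a0 a1 a2 a3 a4) - fCb a4 a0 a1 a2 a3).
Proof. intros; fld. Qed.

Lemma GJ4 (a0 a1 a2 a3 a4 : F) : a0 != 0 -> a1 != 0 -> a2 != 0 -> a3 != 0 -> a4 != 0 -> dC a0 a1 a2 a3 a4 != 0 -> dCb a0 a1 a2 a3 a4 != 0 -> dC a1 a2 a3 a4 a0 != 0 -> dCb a1 a2 a3 a4 a0 != 0 -> dC a2 a3 a4 a0 a1 != 0 -> dCb a2 a3 a4 a0 a1 != 0 -> dC a3 a4 a0 a1 a2 != 0 -> dCb a3 a4 a0 a1 a2 != 0 -> dC a4 a0 a1 a2 a3 != 0 -> dCb a4 a0 a1 a2 a3 != 0 -> pP a0 a1 a2 a3 a4 != 0 ->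
  ((pN a0 a1 a2 a3 a4 / pP a0 a1 a2 a3 a4) - fC a3 a4 a0 a1 a2)*((- pNb a0 a1 a2 a3 a4 / pP a0 a1 a2 a3 a4) - fCb a3 a4 a0 a1 a2) = ((pN a0 a1 a2 a3 a4 / pP a0 a1 a2 a3 a4) - fC a4 a0 a1 a2 a3)*((- pNb a0 a1 a2 a3 a4 / pP a0 a1 a2 a3 a4) - fCb a4 a0 a1 a2 a3).
Proof. intros; fld. Qed.

Lemma GX0 (a0 a1 a2 a3 a4 : F) : a0 != 0 -> a1 != 0 -> a2 != 0 -> a3 != 0 -> a4 != 0 -> a0*a1 - a2*a3 != 0 -> a1*a2 - a3*a4 != 0 -> a2*a3 - a4*a0 != 0 -> a3*a4 - a0*a1 != 0 -> a4*a0 - a1*a2 != 0 -> a0 - a1 != 0 -> a1 - a2 != 0 -> a2 - a3 != 0 -> a3 - a4 != 0 -> a4 - a0 != 0 -> pD a0 a1 a2 a3 a4 != 0 ->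
  (fL a0 a1 a2 a3 a4 - fK a2 a3 a4 a0)*((- pNb a0 a1 a2 a3 a4 / pD a0 a1 a2 a3 a4) - fKb a2 a3 a4 a0) - (fLb a0 a1 a2 a3 a4 - fKb a2 a3 a4 a0)*((pN a0 a1 a2 a3 a4 / pD a0 a1 a2 a3 a4) - fK a2 a3 a4 a0) = 0.
Proof.
intros.
have ndL : dL a0 a1 a2 a3 a4 != 0.
  have -> : dL a0 a1 a2 a3 a4 = (a3-a4)*(a0*a1-a2*a3)*(a0*a4-a1*a2) by rewrite /dL; ring.
  rewrite !mulf_neq0 //; fsides.
have ndLb : dLb a0 a1 a2 a3 a4 != 0.
  have -> : dLb a0 a1 a2 a3 a4 = -((a3-a4)*(a0*a1-a2*a3)*(a0*a4-a1*a2)) by rewrite /dLb; ring.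
  rewrite oppr_eq0 !mulf_neq0 //; fsides.
fld.
Qed.

Lemma GX1 (a0 a1 a2 a3 a4 : F) : a0 != 0 -> a1 != 0 -> a2 != 0 -> a3 != 0 -> a4 != 0 -> a0*a1 - a2*a3 != 0 -> a1*a2 - a3*a4 != 0 -> a2*a3 - a4*a0 != 0 -> a3*a4 - a0*a1 != 0 -> a4*a0 - a1*a2 != 0 -> a0 - a1 != 0 -> a1 - a2 != 0 -> a2 - a3 != 0 -> a3 - a4 != 0 -> a4 - a0 != 0 -> pD a0 a1 a2 a3 a4 != 0 ->
  (fL a1 a2 a3 a4 a0 - fK a3 a4 a0 a1)*((- pNb a0 a1 a2 a3 a4 / pD a0 a1 a2 a3 a4) - fKb a3 a4 a0 a1) - (fLb a1 a2 a3 a4 a0 - fKb a3 a4 a0 a1)*((pN a0 a1 a2 a3 a4 / pD a0 a1 a2 a3 a4) - fK a3 a4 a0 a1) = 0.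
Proof.
intros.
have ndL : dL a1 a2 a3 a4 a0 != 0.
  have -> : dL a1 a2 a3 a4 a0 = (a4-a0)*(a1*a2-a3*a4)*(a1*a0-a2*a3) by rewrite /dL; ring.
  rewrite !mulf_neq0 //; fsides.
have ndLb : dLb a1 a2 a3 a4 a0 != 0.
  have -> : dLb a1 a2 a3 a4 a0 = -((a4-a0)*(a1*a2-a3*a4)*(a1*a0-a2*a3)) by rewrite /dLb; ring.
  rewrite oppr_eq0 !mulf_neq0 //; fsides.
fld.
Qed.

Lemma GX2 (a0 a1 a2 a3 a4 : F) : a0 != 0 -> a1 != 0 -> a2 != 0 -> a3 != 0 -> a4 != 0 -> a0*a1 - a2*a3 != 0 -> a1*a2 - a3*a4 != 0 -> a2*a3 - a4*a0 != 0 -> a3*a4 - a0*a1 != 0 -> a4*a0 - a1*a2 != 0 -> a0 - a1 != 0 -> a1 - a2 != 0 -> a2 - a3 != 0 -> a3 - a4 != 0 -> a4 - a0 != 0 -> pD a0 a1 a2 a3 a4 != 0 ->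
  (fL a2 a3 a4 a0 a1 - fK a4 a0 a1 a2)*((- pNb a0 a1 a2 a3 a4 / pD a0 a1 a2 a3 a4) - fKb a4 a0 a1 a2) - (fLb a2 a3 a4 a0 a1 - fKb a4 a0 a1 a2)*((pN a0 a1 a2 a3 a4 / pD a0 a1 a2 a3 a4) - fK a4 a0 a1 a2) = 0.
Proof.
intros.
have ndL : dL a2 a3 a4 a0 a1 != 0.
  have -> : dL a2 a3 a4 a0 a1 = (a0-a1)*(a2*a3-a4*a0)*(a2*a1-a3*a4) by rewrite /dL; ring.
  rewrite !mulf_neq0 //; fsides.
have ndLb : dLb a2 a3 a4 a0 a1 != 0.
  have -> : dLb a2 a3 a4 a0 a1 = -((a0-a1)*(a2*a3-a4*a0)*(a2*a1-a3*a4)) by rewrite /dLb; ring.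
  rewrite oppr_eq0 !mulf_neq0 //; fsides.
fld.
Qed.

Lemma GX3 (a0 a1 a2 a3 a4 : F) : a0 != 0 -> a1 != 0 -> a2 != 0 -> a3 != 0 -> a4 != 0 -> a0*a1 - a2*a3 != 0 -> a1*a2 - a3*a4 != 0 -> a2*a3 - a4*a0 != 0 -> a3*a4 - a0*a1 != 0 -> a4*a0 - a1*a2 != 0 -> a0 - a1 != 0 -> a1 - a2 != 0 -> a2 - a3 != 0 -> a3 - a4 != 0 -> a4 - a0 != 0 -> pD a0 a1 a2 a3 a4 != 0 ->
  (fL a3 a4 a0 a1 a2 - fK a0 a1 a2 a3)*((- pNb a0 a1 a2 a3 a4 / pD a0 a1 a2 a3 a4) - fKb a0 a1 a2 a3) - (fLb a3 a4 a0 a1 a2 - fKb a0 a1 a2 a3)*((pN a0 a1 a2 a3 a4 / pD a0 a1 a2 a3 a4) - fK a0 a1 a2 a3) = 0.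
Proof.
intros.
have ndL : dL a3 a4 a0 a1 a2 != 0.
  have -> : dL a3 a4 a0 a1 a2 = (a1-a2)*(a3*a4-a0*a1)*(a3*a2-a4*a0) by rewrite /dL; ring.
  rewrite !mulf_neq0 //; fsides.
have ndLb : dLb a3 a4 a0 a1 a2 != 0.
  have -> : dLb a3 a4 a0 a1 a2 = -((a1-a2)*(a3*a4-a0*a1)*(a3*a2-a4*a0)) by rewrite /dLb; ring.
  rewrite oppr_eq0 !mulf_neq0 //; fsides.
fld.
Qed.

Lemma GX4 (a0 a1 a2 a3 a4 : F) : a0 != 0 -> a1 != 0 -> a2 != 0 -> a3 != 0 -> a4 != 0 -> a0*a1 - a2*a3 != 0 -> a1*a2 - a3*a4 != 0 -> a2*a3 - a4*a0 != 0 -> a3*a4 - a0*a1 != 0 -> a4*a0 - a1*a2 != 0 -> a0 - a1 != 0 -> a1 - a2 != 0 -> a2 - a3 != 0 -> a3 - a4 != 0 -> a4 - a0 != 0 -> pD a0 a1 a2 a3 a4 != 0 ->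
  (fL a4 a0 a1 a2 a3 - fK a1 a2 a3 a4)*((- pNb a0 a1 a2 a3 a4 / pD a0 a1 a2 a3 a4) - fKb a1 a2 a3 a4) - (fLb a4 a0 a1 a2 a3 - fKb a1 a2 a3 a4)*((pN a0 a1 a2 a3 a4 / pD a0 a1 a2 a3 a4) - fK a1 a2 a3 a4) = 0.
Proof.
intros.
have ndL : dL a4 a0 a1 a2 a3 != 0.
  have -> : dL a4 a0 a1 a2 a3 = (a2-a3)*(a4*a0-a1*a2)*(a4*a3-a0*a1) by rewrite /dL; ring.
  rewrite !mulf_neq0 //; fsides.
have ndLb : dLb a4 a0 a1 a2 a3 != 0.
  have -> : dLb a4 a0 a1 a2 a3 = -((a2-a3)*(a4*a0-a1*a2)*(a4*a3-a0*a1)) by rewrite /dLb; ring.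
  rewrite oppr_eq0 !mulf_neq0 //; fsides.
fld.
Qed.


Lemma delta_form (sk sl D d0 dk dl e0 ek el : F) : d0 != 0 -> dk != 0 -> dl != 0 -> e0 != 0 -> ek != 0 -> el != 0 ->
  (sk*D/(d0*dk))*(-sl*D/(e0*el)) - (-sk*D/(e0*ek))*(sl*D/(d0*dl))
  = D*D*(sk*(-sl)*dl*ek - (-sk)*sl*dk*el)/(d0*dk*e0*ek*dl*el).
Proof. move=> *; field; fsides. Qed.


Lemma GD1 (a0 a1 a2 a3 a4 : F) : a0 != 0 -> a1 != 0 -> a2 != 0 -> a3 != 0 -> a4 != 0 -> dC a4 a0 a1 a2 a3 != 0 -> dC a0 a1 a2 a3 a4 != 0 ->
  fC a0 a1 a2 a3 a4 - fC a4 a0 a1 a2 a3 = (- a0*a2 + a0*a4 + a1*a2 - a1*a4) * pD a0 a1 a2 a3 a4 / (dC a4 a0 a1 a2 a3 * dC a0 a1 a2 a3 a4).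
Proof. move=> *; fld. Qed.
Lemma GDb1 (a0 a1 a2 a3 a4 : F) : a0 != 0 -> a1 != 0 -> a2 != 0 -> a3 != 0 -> a4 != 0 -> dCb a4 a0 a1 a2 a3 != 0 -> dCb a0 a1 a2 a3 a4 != 0 ->
  fCb a0 a1 a2 a3 a4 - fCb a4 a0 a1 a2 a3 = - (- a0*a2 + a0*a4 + a1*a2 - a1*a4) * pD a0 a1 a2 a3 a4 / (dCb a4 a0 a1 a2 a3 * dCb a0 a1 a2 a3 a4).
Proof. move=> *; fld. Qed.

Lemma GD2 (a0 a1 a2 a3 a4 : F) : a0 != 0 -> a1 != 0 -> a2 != 0 -> a3 != 0 -> a4 != 0 -> dC a4 a0 a1 a2 a3 != 0 -> dC a1 a2 a3 a4 a0 != 0 ->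
  fC a1 a2 a3 a4 a0 - fC a4 a0 a1 a2 a3 = (a1^+2 - a1*a3 - a1*a4 + a3*a4) * pD a0 a1 a2 a3 a4 / (dC a4 a0 a1 a2 a3 * dC a1 a2 a3 a4 a0).
Proof. move=> *; fld. Qed.
Lemma GDb2 (a0 a1 a2 a3 a4 : F) : a0 != 0 -> a1 != 0 -> a2 != 0 -> a3 != 0 -> a4 != 0 -> dCb a4 a0 a1 a2 a3 != 0 -> dCb a1 a2 a3 a4 a0 != 0 ->
  fCb a1 a2 a3 a4 a0 - fCb a4 a0 a1 a2 a3 = - (a1^+2 - a1*a3 - a1*a4 + a3*a4) * pD a0 a1 a2 a3 a4 / (dCb a4 a0 a1 a2 a3 * dCb a1 a2 a3 a4 a0).
Proof. move=> *; fld. Qed.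

Lemma GD3 (a0 a1 a2 a3 a4 : F) : a0 != 0 -> a1 != 0 -> a2 != 0 -> a3 != 0 -> a4 != 0 -> dC a4 a0 a1 a2 a3 != 0 -> dC a2 a3 a4 a0 a1 != 0 ->
  fC a2 a3 a4 a0 a1 - fC a4 a0 a1 a2 a3 = (- a1*a2 + a1*a4 + a2*a4 - a4^+2) * pD a0 a1 a2 a3 a4 / (dC a4 a0 a1 a2 a3 * dC a2 a3 a4 a0 a1).
Proof. move=> *; fld. Qed.
Lemma GDb3 (a0 a1 a2 a3 a4 : F) : a0 != 0 -> a1 != 0 -> a2 != 0 -> a3 != 0 -> a4 != 0 -> dCb a4 a0 a1 a2 a3 != 0 -> dCb a2 a3 a4 a0 a1 != 0 ->
  fCb a2 a3 a4 a0 a1 - fCb a4 a0 a1 a2 a3 = - (- a1*a2 + a1*a4 + a2*a4 - a4^+2) * pD a0 a1 a2 a3 a4 / (dCb a4 a0 a1 a2 a3 * dCb a2 a3 a4 a0 a1).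
Proof. move=> *; fld. Qed.

Lemma GD4 (a0 a1 a2 a3 a4 : F) : a0 != 0 -> a1 != 0 -> a2 != 0 -> a3 != 0 -> a4 != 0 -> dC a4 a0 a1 a2 a3 != 0 -> dC a3 a4 a0 a1 a2 != 0 ->
  fC a3 a4 a0 a1 a2 - fC a4 a0 a1 a2 a3 = (- a0*a1 + a0*a3 + a1*a4 - a3*a4) * pD a0 a1 a2 a3 a4 / (dC a4 a0 a1 a2 a3 * dC a3 a4 a0 a1 a2).
Proof. move=> *; fld. Qed.
Lemma GDb4 (a0 a1 a2 a3 a4 : F) : a0 != 0 -> a1 != 0 -> a2 != 0 -> a3 != 0 -> a4 != 0 -> dCb a4 a0 a1 a2 a3 != 0 -> dCb a3 a4 a0 a1 a2 != 0 ->
  fCb a3 a4 a0 a1 a2 - fCb a4 a0 a1 a2 a3 = - (- a0*a1 + a0*a3 + a1*a4 - a3*a4) * pD a0 a1 a2 a3 a4 / (dCb a4 a0 a1 a2 a3 * dCb a3 a4 a0 a1 a2).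
Proof. move=> *; fld. Qed.

Lemma GT12 (a0 a1 a2 a3 a4 : F) : a0 != 0 -> a1 != 0 -> a2 != 0 -> a3 != 0 -> a4 != 0 -> dC a0 a1 a2 a3 a4 != 0 -> dCb a0 a1 a2 a3 a4 != 0 -> dC a1 a2 a3 a4 a0 != 0 -> dCb a1 a2 a3 a4 a0 != 0 -> dC a2 a3 a4 a0 a1 != 0 -> dCb a2 a3 a4 a0 a1 != 0 -> dC a3 a4 a0 a1 a2 != 0 -> dCb a3 a4 a0 a1 a2 != 0 -> dC a4 a0 a1 a2 a3 != 0 -> dCb a4 a0 a1 a2 a3 != 0 -> (fC a0 a1 a2 a3 a4 - fC a4 a0 a1 a2 a3)*(fCb a1 a2 a3 a4 a0 - fCb a4 a0 a1 a2 a3) - (fCb a0 a1 a2 a3 a4 - fCb a4 a0 a1 a2 a3)*(fC a1 a2 a3 a4 a0 - fC a4 a0 a1 a2 a3) != 0 -> pP a0 a1 a2 a3 a4 != 0 /\ pD a0 a1 a2 a3 a4 != 0.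
Proof.
move=> ? ? ? ? ? ? ? ? ? ? ? ? ? ? ? hd.
rewrite GD1 ?GD2 ?GDb1 ?GDb2 // in hd.
rewrite delta_form // in hd.
have e : (- a0*a2 + a0*a4 + a1*a2 - a1*a4)*(-(a1^+2 - a1*a3 - a1*a4 + a3*a4))*dC a1 a2 a3 a4 a0*dCb a0 a1 a2 a3 a4 - (-(- a0*a2 + a0*a4 + a1*a2 - a1*a4))*(a1^+2 - a1*a3 - a1*a4 + a3*a4)*dC a0 a1 a2 a3 a4*dCb a1 a2 a3 a4 a0 = -((a0 - a1)*(a0 - a3)*(a1 - a2)*(a1 - a3)*(a1 - a4)*(a2 - a4)) * pP a0 a1 a2 a3 a4 by rewrite /pP /dC /dCb; ring.
rewrite e in hd.
by split; apply: contraNneq hd => z; rewrite z !(mul0r, mulr0).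
Qed.

Lemma GT13 (a0 a1 a2 a3 a4 : F) : a0 != 0 -> a1 != 0 -> a2 != 0 -> a3 != 0 -> a4 != 0 -> dC a0 a1 a2 a3 a4 != 0 -> dCb a0 a1 a2 a3 a4 != 0 -> dC a1 a2 a3 a4 a0 != 0 -> dCb a1 a2 a3 a4 a0 != 0 -> dC a2 a3 a4 a0 a1 != 0 -> dCb a2 a3 a4 a0 a1 != 0 -> dC a3 a4 a0 a1 a2 != 0 -> dCb a3 a4 a0 a1 a2 != 0 -> dC a4 a0 a1 a2 a3 != 0 -> dCb a4 a0 a1 a2 a3 != 0 -> (fC a0 a1 a2 a3 a4 - fC a4 a0 a1 a2 a3)*(fCb a2 a3 a4 a0 a1 - fCb a4 a0 a1 a2 a3) - (fCb a0 a1 a2 a3 a4 - fCb a4 a0 a1 a2 a3)*(fC a2 a3 a4 a0 a1 - fC a4 a0 a1 a2 a3) != 0 -> pP a0 a1 a2 a3 a4 != 0 /\ pD a0 a1 a2 a3 a4 != 0.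
Proof.
move=> ? ? ? ? ? ? ? ? ? ? ? ? ? ? ? hd.
rewrite GD1 ?GD3 ?GDb1 ?GDb3 // in hd.
rewrite delta_form // in hd.
have e : (- a0*a2 + a0*a4 + a1*a2 - a1*a4)*(-(- a1*a2 + a1*a4 + a2*a4 - a4^+2))*dC a2 a3 a4 a0 a1*dCb a0 a1 a2 a3 a4 - (-(- a0*a2 + a0*a4 + a1*a2 - a1*a4))*(- a1*a2 + a1*a4 + a2*a4 - a4^+2)*dC a0 a1 a2 a3 a4*dCb a2 a3 a4 a0 a1 = -((a0 - a1)*(a0 - a2)*(a1 - a4)*(a2 - a4)*(a2 - a4)*(a2 - a4)) * pP a0 a1 a2 a3 a4 by rewrite /pP /dC /dCb; ring.
rewrite e in hd.
by split; apply: contraNneq hd => z; rewrite z !(mul0r, mulr0).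
Qed.

Lemma GT14 (a0 a1 a2 a3 a4 : F) : a0 != 0 -> a1 != 0 -> a2 != 0 -> a3 != 0 -> a4 != 0 -> dC a0 a1 a2 a3 a4 != 0 -> dCb a0 a1 a2 a3 a4 != 0 -> dC a1 a2 a3 a4 a0 != 0 -> dCb a1 a2 a3 a4 a0 != 0 -> dC a2 a3 a4 a0 a1 != 0 -> dCb a2 a3 a4 a0 a1 != 0 -> dC a3 a4 a0 a1 a2 != 0 -> dCb a3 a4 a0 a1 a2 != 0 -> dC a4 a0 a1 a2 a3 != 0 -> dCb a4 a0 a1 a2 a3 != 0 -> (fC a0 a1 a2 a3 a4 - fC a4 a0 a1 a2 a3)*(fCb a3 a4 a0 a1 a2 - fCb a4 a0 a1 a2 a3) - (fCb a0 a1 a2 a3 a4 - fCb a4 a0 a1 a2 a3)*(fC a3 a4 a0 a1 a2 - fC a4 a0 a1 a2 a3) != 0 -> pP a0 a1 a2 a3 a4 != 0 /\ pD a0 a1 a2 a3 a4 != 0.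
Proof.
move=> ? ? ? ? ? ? ? ? ? ? ? ? ? ? ? hd.
rewrite GD1 ?GD4 ?GDb1 ?GDb4 // in hd.
rewrite delta_form // in hd.
have e : (- a0*a2 + a0*a4 + a1*a2 - a1*a4)*(-(- a0*a1 + a0*a3 + a1*a4 - a3*a4))*dC a3 a4 a0 a1 a2*dCb a0 a1 a2 a3 a4 - (-(- a0*a2 + a0*a4 + a1*a2 - a1*a4))*(- a0*a1 + a0*a3 + a1*a4 - a3*a4)*dC a0 a1 a2 a3 a4*dCb a3 a4 a0 a1 a2 = -((a0 - a1)*(a0 - a2)*(a0 - a3)*(a0 - a4)*(a1 - a3)*(a2 - a4)) * pP a0 a1 a2 a3 a4 by rewrite /pP /dC /dCb; ring.
rewrite e in hd.
by split; apply: contraNneq hd => z; rewrite z !(mul0r, mulr0).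
Qed.

Lemma GT23 (a0 a1 a2 a3 a4 : F) : a0 != 0 -> a1 != 0 -> a2 != 0 -> a3 != 0 -> a4 != 0 -> dC a0 a1 a2 a3 a4 != 0 -> dCb a0 a1 a2 a3 a4 != 0 -> dC a1 a2 a3 a4 a0 != 0 -> dCb a1 a2 a3 a4 a0 != 0 -> dC a2 a3 a4 a0 a1 != 0 -> dCb a2 a3 a4 a0 a1 != 0 -> dC a3 a4 a0 a1 a2 != 0 -> dCb a3 a4 a0 a1 a2 != 0 -> dC a4 a0 a1 a2 a3 != 0 -> dCb a4 a0 a1 a2 a3 != 0 -> (fC a1 a2 a3 a4 a0 - fC a4 a0 a1 a2 a3)*(fCb a2 a3 a4 a0 a1 - fCb a4 a0 a1 a2 a3) - (fCb a1 a2 a3 a4 a0 - fCb a4 a0 a1 a2 a3)*(fC a2 a3 a4 a0 a1 - fC a4 a0 a1 a2 a3) != 0 -> pP a0 a1 a2 a3 a4 != 0 /\ pD a0 a1 a2 a3 a4 != 0.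
Proof.
move=> ? ? ? ? ? ? ? ? ? ? ? ? ? ? ? hd.
rewrite GD2 ?GD3 ?GDb2 ?GDb3 // in hd.
rewrite delta_form // in hd.
have e : (a1^+2 - a1*a3 - a1*a4 + a3*a4)*(-(- a1*a2 + a1*a4 + a2*a4 - a4^+2))*dC a2 a3 a4 a0 a1*dCb a1 a2 a3 a4 a0 - (-(a1^+2 - a1*a3 - a1*a4 + a3*a4))*(- a1*a2 + a1*a4 + a2*a4 - a4^+2)*dC a1 a2 a3 a4 a0*dCb a2 a3 a4 a0 a1 = -((a1 - a3)*(a1 - a4)*(a2 - a3)*(a2 - a4)*(a1 - a4)*(a1 - a4)) * pP a0 a1 a2 a3 a4 by rewrite /pP /dC /dCb; ring.
rewrite e in hd.
by split; apply: contraNneq hd => z; rewrite z !(mul0r, mulr0).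
Qed.

Lemma GT24 (a0 a1 a2 a3 a4 : F) : a0 != 0 -> a1 != 0 -> a2 != 0 -> a3 != 0 -> a4 != 0 -> dC a0 a1 a2 a3 a4 != 0 -> dCb a0 a1 a2 a3 a4 != 0 -> dC a1 a2 a3 a4 a0 != 0 -> dCb a1 a2 a3 a4 a0 != 0 -> dC a2 a3 a4 a0 a1 != 0 -> dCb a2 a3 a4 a0 a1 != 0 -> dC a3 a4 a0 a1 a2 != 0 -> dCb a3 a4 a0 a1 a2 != 0 -> dC a4 a0 a1 a2 a3 != 0 -> dCb a4 a0 a1 a2 a3 != 0 -> (fC a1 a2 a3 a4 a0 - fC a4 a0 a1 a2 a3)*(fCb a3 a4 a0 a1 a2 - fCb a4 a0 a1 a2 a3) - (fCb a1 a2 a3 a4 a0 - fCb a4 a0 a1 a2 a3)*(fC a3 a4 a0 a1 a2 - fC a4 a0 a1 a2 a3) != 0 -> pP a0 a1 a2 a3 a4 != 0 /\ pD a0 a1 a2 a3 a4 != 0.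
Proof.
move=> ? ? ? ? ? ? ? ? ? ? ? ? ? ? ? hd.
rewrite GD2 ?GD4 ?GDb2 ?GDb4 // in hd.
rewrite delta_form // in hd.
have e : (a1^+2 - a1*a3 - a1*a4 + a3*a4)*(-(- a0*a1 + a0*a3 + a1*a4 - a3*a4))*dC a3 a4 a0 a1 a2*dCb a1 a2 a3 a4 a0 - (-(a1^+2 - a1*a3 - a1*a4 + a3*a4))*(- a0*a1 + a0*a3 + a1*a4 - a3*a4)*dC a1 a2 a3 a4 a0*dCb a3 a4 a0 a1 a2 = -((a0 - a3)*(a0 - a4)*(a1 - a3)*(a1 - a4)*(a1 - a3)*(a1 - a3)) * pP a0 a1 a2 a3 a4 by rewrite /pP /dC /dCb; ring.
rewrite e in hd.
by split; apply: contraNneq hd => z; rewrite z !(mul0r, mulr0).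
Qed.

Lemma GT34 (a0 a1 a2 a3 a4 : F) : a0 != 0 -> a1 != 0 -> a2 != 0 -> a3 != 0 -> a4 != 0 -> dC a0 a1 a2 a3 a4 != 0 -> dCb a0 a1 a2 a3 a4 != 0 -> dC a1 a2 a3 a4 a0 != 0 -> dCb a1 a2 a3 a4 a0 != 0 -> dC a2 a3 a4 a0 a1 != 0 -> dCb a2 a3 a4 a0 a1 != 0 -> dC a3 a4 a0 a1 a2 != 0 -> dCb a3 a4 a0 a1 a2 != 0 -> dC a4 a0 a1 a2 a3 != 0 -> dCb a4 a0 a1 a2 a3 != 0 -> (fC a2 a3 a4 a0 a1 - fC a4 a0 a1 a2 a3)*(fCb a3 a4 a0 a1 a2 - fCb a4 a0 a1 a2 a3) - (fCb a2 a3 a4 a0 a1 - fCb a4 a0 a1 a2 a3)*(fC a3 a4 a0 a1 a2 - fC a4 a0 a1 a2 a3) != 0 -> pP a0 a1 a2 a3 a4 != 0 /\ pD a0 a1 a2 a3 a4 != 0.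
Proof.
move=> ? ? ? ? ? ? ? ? ? ? ? ? ? ? ? hd.
rewrite GD3 ?GD4 ?GDb3 ?GDb4 // in hd.
rewrite delta_form // in hd.
have e : (- a1*a2 + a1*a4 + a2*a4 - a4^+2)*(-(- a0*a1 + a0*a3 + a1*a4 - a3*a4))*dC a3 a4 a0 a1 a2*dCb a2 a3 a4 a0 a1 - (-(- a1*a2 + a1*a4 + a2*a4 - a4^+2))*(- a0*a1 + a0*a3 + a1*a4 - a3*a4)*dC a2 a3 a4 a0 a1*dCb a3 a4 a0 a1 a2 = -((a0 - a2)*(a0 - a4)*(a1 - a3)*(a1 - a4)*(a2 - a4)*(a3 - a4)) * pP a0 a1 a2 a3 a4 by rewrite /pP /dC /dCb; ring.
rewrite e in hd.
by split; apply: contraNneq hd => z; rewrite z !(mul0r, mulr0).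
Qed.
End Alg.
Ltac nzt :=
  match goal with
  | |- is_true (?e != 0) =>
    match goal with
    | H : is_true (?d != 0) |- _ =>
        (have ->: e = d by (try unfold dC, dCb, pP, pD, dL, dLb); ring); exact H
    | H : is_true (?d != 0) |- _ =>
        (have ->: e = - d by (try unfold dC, dCb, pP, pD, dL, dLb); ring); rewrite oppr_eq0; exact H
    end
  end.
Ltac splitnz := repeat (apply/andP; split);
  try (rewrite ?oppr_eq0 ?mulf_eq0 ?expf_eq0 /= ?negb_or; repeat (apply/andP; split)).
Ltac fsides := splitnz; try assumption; try nzt.
Ltac fld := (try unfold fB, fBb, fK, fKb, fC, fCb, fL, fLb, nC, dC, nCb, dCb, nL, dL, nLb, dLb, pN, pP, pD, pNb); field; fsides.


Section Conv.
Variable R : realType.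
Local Notation CC := R[i].

Lemma cmulE (a b c d : R) : (Complex a b) * (Complex c d) = Complex (a*c - b*d) (a*d + b*c) :> CC.
Proof. by []. Qed.
Lemma csubE (a b c d : R) : (Complex a b) - (Complex c d) = Complex (a-c) (b-d) :> CC.
Proof. by []. Qed.
Lemma conjE (a b : R) : conjc (Complex a b) = Complex a (-b). Proof. by []. Qed.

Variables (O : pt R) (rho : R).
Hypothesis hrho : rho != 0.

Definition zz (P : pt R) : CC := Complex ((P.1 - O.1)/rho) ((P.2 - O.2)/rho).
Definition zzb (P : pt R) : CC := Complex ((P.1 - O.1)/rho) (- ((P.2 - O.2)/rho)).
Definition mkpt (w : CC) : pt R := (O.1 + rho * complex.Re w, O.2 + rho * complex.Im w).

Lemma zzbE P : zzb P = conjc (zz P). Proof. by []. Qed.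

Lemma zcross P Q S : (zz Q - zz P)*(zzb S - zzb P) - (zzb Q - zzb P)*(zz S - zz P)
  = Complex 0 (- (2 * cross P Q S) / rho^+2).
Proof.
rewrite /zz /zzb !csubE /cross; congr Complex; field; done.
Qed.

Lemma zdist P Q : (zz P - zz Q)*(zzb P - zzb Q) = Complex (sqdist P Q / rho^+2) 0.
Proof.
rewrite /zz /zzb !csubE /sqdist; congr Complex; field; done.
Qed.

Lemma zlm P Q S T : (zz Q - zz P)*(zzb T - zzb S) - (zzb Q - zzb P)*(zz T - zz S)
  = Complex 0 (- (2 * ((Q.1 - P.1) * (T.2 - S.2) - (Q.2 - P.2) * (T.1 - S.1))) / rho^+2).
Proof.
rewrite /zz /zzb !csubE; congr Complex; field; done.
Qed.

Lemma cim0 (v : R) : (Complex 0 v = 0 :> CC) <-> v = 0.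
Proof. by split => [[]|->]. Qed.

Lemma coef0 (v : R) : v != 0 -> - (2 * v) / rho^+2 != 0.
Proof.
move=> hv; rewrite mulNr oppr_eq0 mulf_neq0 ?invr_neq0 ?expf_neq0 //.
by rewrite mulf_neq0 // pnatr_eq0.
Qed.

Lemma cross_z0 P Q S : cross P Q S = 0 ->
  (zz Q - zz P)*(zzb S - zzb P) - (zzb Q - zzb P)*(zz S - zz P) = 0.
Proof. by move=> h; rewrite zcross h mulr0 oppr0 mul0r. Qed.

Lemma cross_zN P Q S : cross P Q S != 0 ->
  (zz Q - zz P)*(zzb S - zzb P) - (zzb Q - zzb P)*(zz S - zz P) != 0.
Proof. move=> h; rewrite zcross; apply/negP => /eqP /cim0 /eqP; exact/negP/coef0. Qed.

Lemma z_cross0 P Q S :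
  (zz Q - zz P)*(zzb S - zzb P) - (zzb Q - zzb P)*(zz S - zz P) = 0 -> cross P Q S = 0.
Proof.
rewrite zcross => /cim0 h; apply/eqP; apply: contraLR isT => hn.
by move: (coef0 hn); rewrite h eqxx.
Qed.

Lemma lm_zN P Q S T : lines_meet P Q S T ->
  (zz Q - zz P)*(zzb T - zzb S) - (zzb Q - zzb P)*(zz T - zz S) != 0.
Proof. move=> h; rewrite zlm; apply/negP => /eqP /cim0 /eqP; exact/negP/coef0. Qed.

Lemma dist_z P Q P' Q' : sqdist P Q = sqdist P' Q' ->
  (zz P - zz Q)*(zzb P - zzb Q) = (zz P' - zz Q')*(zzb P' - zzb Q').
Proof. by move=> h; rewrite !zdist h. Qed.

Lemma z_dist P Q P' Q' :
  (zz P - zz Q)*(zzb P - zzb Q) = (zz P' - zz Q')*(zzb P' - zzb Q') -> sqdist P Q = sqdist P' Q'.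
Proof.
rewrite !zdist => -[] h.
have h2 : rho^+2 != 0 by rewrite expf_neq0.
by move: h => /(congr1 (fun t => t * rho^+2)); rewrite !mulfVK.
Qed.

Lemma zz_inj P Q : zz P = zz Q -> P = Q.
Proof.
case: P Q => [p1 p2] [q1 q2]; rewrite /zz /= => -[h1 h2].
have e1 : p1 - O.1 = q1 - O.1 by move: h1 => /(congr1 (fun t => t * rho)); rewrite !mulfVK.
have e2 : p2 - O.2 = q2 - O.2 by move: h2 => /(congr1 (fun t => t * rho)); rewrite !mulfVK.
by move: e1 e2 => /addIr -> /addIr ->.
Qed.

Lemma zzb_inj P Q : zzb P = zzb Q -> P = Q.
Proof. by rewrite !zzbE => /(congr1 conjc); rewrite !conjcK; apply: zz_inj. Qed.

Lemma zz_mkpt w : zz (mkpt w) = w.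
Proof. case: w => a b; rewrite /zz /mkpt /=; congr Complex; field; done. Qed.

Lemma zzb_mkpt w : zzb (mkpt w) = conjc w.
Proof. by rewrite zzbE zz_mkpt. Qed.

Lemma zzO : zz O = 0.
Proof. by rewrite /zz !subrr !mul0r. Qed.
Lemma zzbO : zzb O = 0.
Proof. by rewrite /zzb !subrr !mul0r oppr0. Qed.

Lemma zz_unit P : sqdist O P = rho^+2 -> zz P * zzb P = 1.
Proof.
move=> h; have := zdist P O; rewrite zzO zzbO !subr0 => ->.
rewrite (_ : sqdist P O = sqdist O P); last by rewrite /sqdist; ring.
by rewrite h divff // expf_neq0.
Qed.

End Conv.

Definition o1 : 'I_5 := @Ordinal 5 1 isT.
Definition o2 : 'I_5 := @Ordinal 5 2 isT.
Definition o3 : 'I_5 := @Ordinal 5 3 isT.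
Definition o4 : 'I_5 := @Ordinal 5 4 isT.

Lemma I5_cases (P : 'I_5 -> Prop) : P ord0 -> P o1 -> P o2 -> P o3 -> P o4 -> forall i, P i.
Proof.
move=> p0 p1 p2 p3 p4 [[|[|[|[|[|n]]]]] h].
- by rewrite (_ : Ordinal h = ord0) //; apply: val_inj.
- by rewrite (_ : Ordinal h = o1) //; apply: val_inj.
- by rewrite (_ : Ordinal h = o2) //; apply: val_inj.
- by rewrite (_ : Ordinal h = o3) //; apply: val_inj.
- by rewrite (_ : Ordinal h = o4) //; apply: val_inj.
- by [].
Qed.

Lemma nx41 i : nx (nx i 4) 1 = i. Proof. by elim/I5_cases: i; apply: val_inj. Qed.
Lemma nx42 i : nx (nx i 4) 2 = nx i 1. Proof. by elim/I5_cases: i; apply: val_inj. Qed.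
Lemma nx43 i : nx (nx i 4) 3 = nx i 2. Proof. by elim/I5_cases: i; apply: val_inj. Qed.
Lemma nx11 i : nx (nx i 1) 1 = nx i 2. Proof. by elim/I5_cases: i; apply: val_inj. Qed.
Lemma nx12 i : nx (nx i 1) 2 = nx i 3. Proof. by elim/I5_cases: i; apply: val_inj. Qed.
Lemma nx13 i : nx (nx i 1) 3 = nx i 4. Proof. by elim/I5_cases: i; apply: val_inj. Qed.
Lemma nx14 i : nx (nx i 1) 4 = i. Proof. by elim/I5_cases: i; apply: val_inj. Qed.
Lemma nx21 i : nx (nx i 2) 1 = nx i 3. Proof. by elim/I5_cases: i; apply: val_inj. Qed.
Lemma nx31 i : nx (nx i 3) 1 = nx i 4. Proof. by elim/I5_cases: i; apply: val_inj. Qed.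
Lemma nx32 i : nx (nx i 3) 2 = i. Proof. by elim/I5_cases: i; apply: val_inj. Qed.
Lemma nx33 i : nx (nx i 3) 3 = nx i 1. Proof. by elim/I5_cases: i; apply: val_inj. Qed.
Lemma nxc01 : nx ord0 1 = o1. Proof. exact: val_inj. Qed.
Lemma nxc02 : nx ord0 2 = o2. Proof. exact: val_inj. Qed.
Lemma nxc03 : nx ord0 3 = o3. Proof. exact: val_inj. Qed.
Lemma nxc04 : nx ord0 4 = o4. Proof. exact: val_inj. Qed.
Lemma nxc11 : nx o1 1 = o2. Proof. exact: val_inj. Qed.
Lemma nxc12 : nx o1 2 = o3. Proof. exact: val_inj. Qed.
Lemma nxc13 : nx o1 3 = o4. Proof. exact: val_inj. Qed.
Lemma nxc14 : nx o1 4 = ord0. Proof. exact: val_inj. Qed.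
Lemma nxc21 : nx o2 1 = o3. Proof. exact: val_inj. Qed.
Lemma nxc22 : nx o2 2 = o4. Proof. exact: val_inj. Qed.
Lemma nxc23 : nx o2 3 = ord0. Proof. exact: val_inj. Qed.
Lemma nxc24 : nx o2 4 = o1. Proof. exact: val_inj. Qed.
Lemma nxc31 : nx o3 1 = o4. Proof. exact: val_inj. Qed.
Lemma nxc32 : nx o3 2 = ord0. Proof. exact: val_inj. Qed.
Lemma nxc33 : nx o3 3 = o1. Proof. exact: val_inj. Qed.
Lemma nxc34 : nx o3 4 = o2. Proof. exact: val_inj. Qed.
Lemma nxc41 : nx o4 1 = ord0. Proof. exact: val_inj. Qed.
Lemma nxc42 : nx o4 2 = o1. Proof. exact: val_inj. Qed.
Lemma nxc43 : nx o4 3 = o2. Proof. exact: val_inj. Qed.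
Lemma nxc44 : nx o4 4 = o3. Proof. exact: val_inj. Qed.
Ltac nxc := rewrite ?nxc01 ?nxc02 ?nxc03 ?nxc04 ?nxc11 ?nxc12 ?nxc13 ?nxc14 ?nxc21 ?nxc22 ?nxc23 ?nxc24 ?nxc31 ?nxc32 ?nxc33 ?nxc34 ?nxc41 ?nxc42 ?nxc43 ?nxc44.

Lemma triple (R : realType) (C : 'I_5 -> pt R) (J : pt R) :
  (forall i, sqdist J (C i) = sqdist J (C ord0)) ->
  (forall J', (forall i, sqdist J' (C i) = sqdist J' (C ord0)) -> J' = J) ->
  exists k l, cross (C ord0) (C k) (C l) != 0.
Proof.
move=> hJ hJu.
case: (boolP [exists k, [exists l, cross (C ord0) (C k) (C l) != 0]]).
  by move=> /existsP[k /existsP[l h]]; exists k, l.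
rewrite negb_exists => /forallP hk.
have h0 : forall k l, cross (C ord0) (C k) (C l) = 0.
  by move=> k l; move: (hk k); rewrite negb_exists => /forallP /(_ l); rewrite negbK => /eqP.
exfalso.
case: (boolP [exists k, C k != C ord0]).
- move=> /existsP[k hk0].
  have hJ' : (J.1 - ((C k).2 - (C ord0).2), J.2 + ((C k).1 - (C ord0).1)) = J.
    apply: hJu => i.
    have h1 := hJ i; have h2 := h0 k i.
    move/eq0_of_eq: h1 => h1.
    refine (@cert2 _ _ _ _ _ 1 (-2) _ h1 h2).
    by rewrite /sqdist /cross /=; ring.
  have e1 := congr1 fst hJ'; have e2 := congr1 snd hJ'; simpl in e1, e2.
  move/negP: hk0; apply; apply/eqP.
  rewrite [C k]surjective_pairing [C ord0]surjective_pairing; congr pair; lra.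
- rewrite negb_exists => /forallP hall.
  have hc : forall i, C i = C ord0 by move=> i; move: (hall i); rewrite negbK => /eqP.
  have hJ' : (J.1 + 1, J.2) = J by apply: hJu => i; rewrite hc.
  have e1 := congr1 fst hJ'; simpl in e1.
  have : (1:R) == 0 by apply/eqP; lra.
  by rewrite oner_eq0.
Qed.

Section ConjL.
Variable F : fieldType.
Lemma conjNQ (f : {rmorphism F -> F}) (a0 a1 a2 a3 a4 : F) (Q : F -> F -> F -> F -> F -> F) :
  a0 != 0 -> a1 != 0 -> a2 != 0 -> a3 != 0 -> a4 != 0 ->
  f a0 = a0^-1 -> f a1 = a1^-1 -> f a2 = a2^-1 -> f a3 = a3^-1 -> f a4 = a4^-1 ->
  (Q = @pP _ \/ Q = @pD _) -> Q a0 a1 a2 a3 a4 != 0 ->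
  f (pN a0 a1 a2 a3 a4 / Q a0 a1 a2 a3 a4) = - pNb a0 a1 a2 a3 a4 / Q a0 a1 a2 a3 a4.
Proof.
move=> n0 n1 n2 n3 n4 c0 c1 c2 c3 c4 hQ nQ.
rewrite fmorph_div.
case: hQ => hQ; rewrite hQ in nQ *; rewrite /pN /pNb /pP /pD;
rewrite !(rmorphB, rmorphD, rmorphN, rmorphM, rmorphXn, rmorph_nat, rmorph1) c0 c1 c2 c3 c4;
rewrite /pP /pD in nQ; field; fsides.
Qed.
End ConjL.

Lemma subr_neq0_sym (T : zmodType) (x y : T) : x - y != 0 -> y - x != 0.
Proof. by rewrite -opprB oppr_eq0. Qed.

Section Main.
Variables (R : realType) (A B K C L : 'I_5 -> pt R) (O J X : pt R).
Hypothesis hB : forall i : 'I_5,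
     lines_meet (A i) (A (nx i 1)) (A (nx i 2)) (A (nx i 3)) /\
     on_line (A i) (A (nx i 1)) (B (nx i 3)) /\
     on_line (A (nx i 2)) (A (nx i 3)) (B (nx i 3)).
Hypothesis hK : forall i : 'I_5, circumcenter (A i) (A (nx i 1)) (B (nx i 2)) (K (nx i 2)).
Hypothesis hC : forall i : 'I_5,
     C (nx i 1) <> A (nx i 1) /\ K (nx i 2) <> K (nx i 3) /\
     sqdist (K (nx i 2)) (C (nx i 1)) = sqdist (K (nx i 2)) (A (nx i 1)) /\
     sqdist (K (nx i 3)) (C (nx i 1)) = sqdist (K (nx i 3)) (A (nx i 1)).
Hypothesis hL : forall i : 'I_5, circumcenter (C (nx i 1)) (B (nx i 2)) (B (nx i 3)) (L i).
Hypothesis hO : forall i : 'I_5, sqdist O (A i) = sqdist O (A ord0).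
Hypothesis hJ : forall i : 'I_5, sqdist J (C i) = sqdist J (C ord0).
Hypothesis hJu : forall J' : pt R, (forall i : 'I_5, sqdist J' (C i) = sqdist J' (C ord0)) -> J' = J.
Hypothesis hX : forall i : 'I_5, K i <> L i /\ on_line (K i) (L i) X.
Hypothesis hXu : forall X' : pt R, (forall i : 'I_5, on_line (K i) (L i) X') -> X' = X.

Lemma sq_eq0 (P Q : pt R) : sqdist P Q = 0 -> P = Q.
Proof.
case: P Q => [p1 p2] [q1 q2]; rewrite /sqdist /= => /eqP.
by rewrite paddr_eq0 ?sqr_ge0 // !sqrf_eq0 !subr_eq0 => /andP[/eqP -> /eqP ->].
Qed.

Lemma s_pos : 0 < sqdist O (A ord0).
Proof.
have hge : 0 <= sqdist O (A ord0) by rewrite /sqdist addr_ge0 // sqr_ge0.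
rewrite lt_def hge andbT; apply/eqP => h0.
have e0 := sq_eq0 h0.
have e1 : O = A (nx ord0 1) by apply: sq_eq0; rewrite hO.
move: (hB ord0) => [+ _]; rewrite /lines_meet -e1 -e0 !subrr !mul0r subrr.
by rewrite eqxx.
Qed.

Let rho := Num.sqrt (sqdist O (A ord0)).
Lemma hr2 : rho ^+ 2 = sqdist O (A ord0).
Proof. by rewrite /rho sqr_sqrtr // ltW // s_pos. Qed.
Lemma hrho : rho != 0.
Proof. by rewrite /rho sqrtr_eq0 -ltNge s_pos. Qed.

Local Notation z := (zz O rho).
Local Notation zb := (zzb O rho).
Local Notation a i := (zz O rho (A i)).

Lemma hunit i : a i * zb (A i) = 1.
Proof. by apply: zz_unit; rewrite ?hrho // hO hr2. Qed.
Lemma han i : a i != 0.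
Proof. by apply/eqP => e; move: (hunit i); rewrite e mul0r => /eqP; rewrite eq_sym oner_eq0. Qed.
Lemma hab i : zb (A i) = (a i)^-1.
Proof. by rewrite -[zb (A i)]mul1r -(mulVf (han i)) -mulrA hunit mulr1. Qed.
Lemma hconj i : conjc (a i) = (a i)^-1.
Proof. by rewrite -zzbE hab. Qed.

Lemma HB i : [/\ z (B (nx i 3)) = fB (a i) (a (nx i 1)) (a (nx i 2)) (a (nx i 3)),
   zb (B (nx i 3)) = fBb (a i) (a (nx i 1)) (a (nx i 2)) (a (nx i 3)),
   a (nx i 1) - a i != 0, a (nx i 3) - a (nx i 2) != 0 &
   a i * a (nx i 1) - a (nx i 2) * a (nx i 3) != 0].
Proof.
case: (hB i) => hlm [h1 h2].
apply: LB; [exact: han | exact: han | exact: han | exact: han | | | ].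
- by have := lm_zN O hrho hlm; rewrite !hab.
- by have := cross_z0 O hrho h1; rewrite !hab.
- by have := cross_z0 O hrho h2; rewrite !hab.
Qed.

Lemma HB2 i : [/\ z (B (nx i 2)) = fB (a (nx i 4)) (a i) (a (nx i 1)) (a (nx i 2)),
   zb (B (nx i 2)) = fBb (a (nx i 4)) (a i) (a (nx i 1)) (a (nx i 2)) &
   a (nx i 4) * a i - a (nx i 1) * a (nx i 2) != 0].
Proof.
case: (HB (nx i 4)) => h1 h2 _ _ h5.
by rewrite nx41 nx42 nx43 in h1 h2 h5; split.
Qed.

Lemma HK i : [/\ z (K (nx i 2)) = fK (a (nx i 4)) (a i) (a (nx i 1)) (a (nx i 2)),
   zb (K (nx i 2)) = fKb (a (nx i 4)) (a i) (a (nx i 1)) (a (nx i 2)),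
   a i - a (nx i 1) != 0, a i - a (nx i 2) != 0 & a (nx i 1) - a (nx i 4) != 0].
Proof.
case: (hK i) => hnc [h1 h2]; case: (HB2 i) => eb ebb hb.
have hnc' : cross (A i) (A (nx i 1)) (B (nx i 2)) != 0 by apply/eqP.
apply: LK; [exact: han | exact: han | exact: han | exact: han | exact: hb | | | ].
- by have := cross_zN O hrho hnc'; rewrite !hab eb ebb.
- by have := dist_z O hrho h1; rewrite !hab.
- by have := dist_z O hrho h2; rewrite !hab eb ebb.
Qed.

Lemma HK3 i : z (K (nx i 3)) = fK (a i) (a (nx i 1)) (a (nx i 2)) (a (nx i 3)) /\
   zb (K (nx i 3)) = fKb (a i) (a (nx i 1)) (a (nx i 2)) (a (nx i 3)).
Proof.
case: (HK (nx i 1)) => h1 h2 _ _ _.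
by rewrite nx12 nx14 nx11 in h1 h2.
Qed.

Lemma HC i : [/\ z (C (nx i 1)) = fC (a i) (a (nx i 1)) (a (nx i 2)) (a (nx i 3)) (a (nx i 4)),
   zb (C (nx i 1)) = fCb (a i) (a (nx i 1)) (a (nx i 2)) (a (nx i 3)) (a (nx i 4)),
   dC (a i) (a (nx i 1)) (a (nx i 2)) (a (nx i 3)) (a (nx i 4)) != 0 &
   dCb (a i) (a (nx i 1)) (a (nx i 2)) (a (nx i 3)) (a (nx i 4)) != 0].
Proof.
case: (hC i) => hca [hkk [h1 h2]].
case: (HK i) => ek2 ekb2 _ _ _; case: (HK3 i) => ek3 ekb3.
case: (HB2 i) => _ _ hb1; case: (HB i) => _ _ _ _ hb2.
apply: LC; [exact: han | exact: han | exact: han | exact: han | exact: han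
           | exact: hb1 | exact: hb2 | | | | | ].
- by rewrite subr_eq0; apply/eqP => /(zz_inj hrho).
- by rewrite -ek2 -ek3 subr_eq0; apply/eqP => /(zz_inj hrho).
- by rewrite -ekb2 -ekb3 subr_eq0; apply/eqP => /(zzb_inj hrho).
- by have := dist_z O hrho h1; rewrite !hab ek2 ekb2.
- by have := dist_z O hrho h2; rewrite !hab ek3 ekb3.
Qed.

Lemma HL i : [/\ z (L i) = fL (a i) (a (nx i 1)) (a (nx i 2)) (a (nx i 3)) (a (nx i 4)),
   zb (L i) = fLb (a i) (a (nx i 1)) (a (nx i 2)) (a (nx i 3)) (a (nx i 4)),
   a i - a (nx i 2) != 0, a i - a (nx i 3) != 0 & a (nx i 2) - a (nx i 4) != 0].
Proof.
case: (hL i) => hnc [h1 h2].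
case: (HC i) => ec ecb hdc hdcb.
case: (HB2 i) => eb2 eb2b hb1; case: (HB i) => eb3 eb3b _ _ hb2.
case: (HB (nx i 3)) => _ _ h34 _ _; rewrite nx31 in h34.
have hnc' : cross (C (nx i 1)) (B (nx i 2)) (B (nx i 3)) != 0 by apply/eqP.
apply: LL; [exact: han | exact: han | exact: han | exact: han | exact: han
           | exact: hb1 | exact: hb2 | exact: subr_neq0_sym h34 | exact: hdc | exact: hdcb | | | ].
- by have := cross_zN O hrho hnc'; rewrite ec ecb eb2 eb2b eb3 eb3b.
- by have := dist_z O hrho h1; rewrite ec ecb eb2 eb2b.
- by have := dist_z O hrho h2; rewrite ec ecb eb3 eb3b.
Qed.


Lemma main : collinear O J X.
Proof.
have n0 := han ord0; have n1 := han o1; have n2 := han o2; have n3 := han o3; have n4 := han o4.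
move: (HC o4); nxc => -[zC0 zCb0 dC0 dCb0].
move: (HC ord0); nxc => -[zC1 zCb1 dC1 dCb1].
move: (HC o1); nxc => -[zC2 zCb2 dC2 dCb2].
move: (HC o2); nxc => -[zC3 zCb3 dC3 dCb3].
move: (HC o3); nxc => -[zC4 zCb4 dC4 dCb4].
move: (HK o3); nxc => -[zK0 zKb0 _ _ _].
move: (HK o4); nxc => -[zK1 zKb1 _ _ _].
move: (HK ord0); nxc => -[zK2 zKb2 _ _ _].
move: (HK o1); nxc => -[zK3 zKb3 _ _ _].
move: (HK o2); nxc => -[zK4 zKb4 _ _ _].
move: (HL ord0); nxc => -[zL0 zLb0 _ _ _].
move: (HL o1); nxc => -[zL1 zLb1 _ _ _].
move: (HL o2); nxc => -[zL2 zLb2 _ _ _].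
move: (HL o3); nxc => -[zL3 zLb3 _ _ _].
move: (HL o4); nxc => -[zL4 zLb4 _ _ _].
move: (HB ord0); nxc => -[_ _ /subr_neq0_sym c0 _ b0].
move: (HB o1); nxc => -[_ _ /subr_neq0_sym c1 _ b1].
move: (HB o2); nxc => -[_ _ /subr_neq0_sym c2 _ b2].
move: (HB o3); nxc => -[_ _ /subr_neq0_sym c3 _ b3].
move: (HB o4); nxc => -[_ _ /subr_neq0_sym c4 _ b4].
have [k [l hkl]] := triple hJ hJu.
have hlk : cross (C ord0) (C l) (C k) != 0.
  by rewrite (_ : cross (C ord0) (C l) (C k) = - cross (C ord0) (C k) (C l)) ?oppr_eq0 // /cross; ring.
have [hP hD] : pP (a ord0) (a o1) (a o2) (a o3) (a o4) != 0 /\ pD (a ord0) (a o1) (a o2) (a o3) (a o4) != 0.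
  move: hkl hlk; elim/I5_cases: k; elim/I5_cases: l => hkl hlk;
  first [ exfalso; move/eqP: hkl; apply; rewrite /cross; ring
        | move: (cross_zN O hrho hkl); rewrite ?zC0 ?zC1 ?zC2 ?zC3 ?zC4 ?zCb0 ?zCb1 ?zCb2 ?zCb3 ?zCb4 => hd; first [ by apply: GT12 | by apply: GT13 | by apply: GT14 | by apply: GT23 | by apply: GT24 | by apply: GT34 ]
        | move: (cross_zN O hrho hlk); rewrite ?zC0 ?zC1 ?zC2 ?zC3 ?zC4 ?zCb0 ?zCb1 ?zCb2 ?zCb3 ?zCb4 => hd; first [ by apply: GT12 | by apply: GT13 | by apply: GT14 | by apply: GT23 | by apply: GT24 | by apply: GT34 ] ].
pose w := pN (a ord0) (a o1) (a o2) (a o3) (a o4) / pP (a ord0) (a o1) (a o2) (a o3) (a o4).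
pose x := pN (a ord0) (a o1) (a o2) (a o3) (a o4) / pD (a ord0) (a o1) (a o2) (a o3) (a o4).
have hw : conjc w = - pNb (a ord0) (a o1) (a o2) (a o3) (a o4) / pP (a ord0) (a o1) (a o2) (a o3) (a o4).
  by apply: conjNQ => //; [exact: hconj | exact: hconj | exact: hconj | exact: hconj | exact: hconj | left].
have hx : conjc x = - pNb (a ord0) (a o1) (a o2) (a o3) (a o4) / pD (a ord0) (a o1) (a o2) (a o3) (a o4).
  by apply: conjNQ => //; [exact: hconj | exact: hconj | exact: hconj | exact: hconj | exact: hconj | right].
have eJ : mkpt O rho w = J.
  apply: hJu; elim/I5_cases => //.
  - apply: (z_dist (O:=O) hrho); rewrite (zz_mkpt O hrho) (zzb_mkpt O hrho) hw ?zC0 ?zC1 ?zC2 ?zC3 ?zC4 ?zCb0 ?zCb1 ?zCb2 ?zCb3 ?zCb4; rewrite /w; by apply: GJ1.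
  - apply: (z_dist (O:=O) hrho); rewrite (zz_mkpt O hrho) (zzb_mkpt O hrho) hw ?zC0 ?zC1 ?zC2 ?zC3 ?zC4 ?zCb0 ?zCb1 ?zCb2 ?zCb3 ?zCb4; rewrite /w; by apply: GJ2.
  - apply: (z_dist (O:=O) hrho); rewrite (zz_mkpt O hrho) (zzb_mkpt O hrho) hw ?zC0 ?zC1 ?zC2 ?zC3 ?zC4 ?zCb0 ?zCb1 ?zCb2 ?zCb3 ?zCb4; rewrite /w; by apply: GJ3.
  - apply: (z_dist (O:=O) hrho); rewrite (zz_mkpt O hrho) (zzb_mkpt O hrho) hw ?zC0 ?zC1 ?zC2 ?zC3 ?zC4 ?zCb0 ?zCb1 ?zCb2 ?zCb3 ?zCb4; rewrite /w; by apply: GJ4.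
have eX : mkpt O rho x = X.
  apply: hXu; elim/I5_cases.
  - apply: (z_cross0 (O:=O) hrho); rewrite (zz_mkpt O hrho) (zzb_mkpt O hrho) hx zK0 zKb0 zL0 zLb0; rewrite /x; by apply: GX0.
  - apply: (z_cross0 (O:=O) hrho); rewrite (zz_mkpt O hrho) (zzb_mkpt O hrho) hx zK1 zKb1 zL1 zLb1; rewrite /x; by apply: GX1.
  - apply: (z_cross0 (O:=O) hrho); rewrite (zz_mkpt O hrho) (zzb_mkpt O hrho) hx zK2 zKb2 zL2 zLb2; rewrite /x; by apply: GX2.
  - apply: (z_cross0 (O:=O) hrho); rewrite (zz_mkpt O hrho) (zzb_mkpt O hrho) hx zK3 zKb3 zL3 zLb3; rewrite /x; by apply: GX3.
  - apply: (z_cross0 (O:=O) hrho); rewrite (zz_mkpt O hrho) (zzb_mkpt O hrho) hx zK4 zKb4 zL4 zLb4; rewrite /x; by apply: GX4.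
rewrite /collinear -eJ -eX; apply: (z_cross0 (O:=O) hrho).
rewrite zzO zzbO !(zz_mkpt O hrho) !(zzb_mkpt O hrho) hw hx /w /x !subr0.
field; fsides.
Qed.

End Main.

Unset Implicit Arguments. Set Strict Implicit. Set Printing Implicit Defensive.

Theorem theorem2p4 (R : realType) (A B K C L : 'I_5 -> pt R) (O J X : pt R)
  (hB : forall i : 'I_5,
     lines_meet (A i) (A (nx i 1)) (A (nx i 2)) (A (nx i 3)) /\
     on_line (A i) (A (nx i 1)) (B (nx i 3)) /\
     on_line (A (nx i 2)) (A (nx i 3)) (B (nx i 3)))
  (hK : forall i : 'I_5, circumcenter (A i) (A (nx i 1)) (B (nx i 2)) (K (nx i 2)))
  (hC : forall i : 'I_5,
     C (nx i 1) <> A (nx i 1) /\ K (nx i 2) <> K (nx i 3) /\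
     sqdist (K (nx i 2)) (C (nx i 1)) = sqdist (K (nx i 2)) (A (nx i 1)) /\
     sqdist (K (nx i 3)) (C (nx i 1)) = sqdist (K (nx i 3)) (A (nx i 1)))
  (hL : forall i : 'I_5, circumcenter (C (nx i 1)) (B (nx i 2)) (B (nx i 3)) (L i))
  (hO : forall i : 'I_5, sqdist O (A i) = sqdist O (A ord0))
  (hJ : forall i : 'I_5, sqdist J (C i) = sqdist J (C ord0))
  (hJu : forall J' : pt R, (forall i : 'I_5, sqdist J' (C i) = sqdist J' (C ord0)) -> J' = J)
  (hX : forall i : 'I_5, K i <> L i /\ on_line (K i) (L i) X)
  (hXu : forall X' : pt R, (forall i : 'I_5, on_line (K i) (L i) X') -> X' = X) :
  collinear O J X.
Proof. by apply: main. Qed.
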